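(* Let $A_1,\dots,A_{20}$ be the vertices of a regular dodecahedron in $\mathbb R^3$ and let $\Gamma$ be its circumscribed sphere. There are at most eight real numbers $\lambda$ for which the function $M\mapsto\sum_{i=1}^{20}|MA_i|^{\lambda}$ is constant on $\Gamma\setminus\{A_1,\dots,A_{20}\}$.
   Context: $|MA|$ denotes Euclidean distance. *)

(* Defs.v *)
From Stdlib Require Import Reals List.
Import ListNotations.
Open Scope R_scope.

Definition point : Type := (R * R * R)%type.

Definition dist3 (P Q : point) : R :=
  let '(x1, y1, z1) := P in
  let '(x2, y2, z2) := Q in
  sqrt ((x1 - x2)^2 + (y1 - y2)^2 + (z1 - z2)^2).

Definition phi : R := (1 + sqrt 5) / 2.

Definition std_dodeca_vertices : list point :=
  [ (1,1,1); (1,1,-1); (1,-1,1); (1,-1,-1);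
    (-1,1,1); (-1,1,-1); (-1,-1,1); (-1,-1,-1);
    (0, /phi, phi); (0, /phi, -phi); (0, -/phi, phi); (0, -/phi, -phi);
    (/phi, phi, 0); (/phi, -phi, 0); (-/phi, phi, 0); (-/phi, -phi, 0);
    (phi, 0, /phi); (phi, 0, -/phi); (-phi, 0, /phi); (-phi, 0, -/phi) ].

Definition is_similarity (f : point -> point) : Prop :=
  exists s : R, 0 < s /\ forall P Q, dist3 (f P) (f Q) = s * dist3 P Q.

(* A list A of 20 points is the vertex list of a regular dodecahedron iff it is
   the image of the standard vertex list under a similarity (all regular
   dodecahedra are similar to each other). *)
Definition is_regular_dodecahedron_vertices (A : list point) : Prop :=
  exists f, is_similarity f /\ A = map f std_dodeca_vertices.

Definition circumscribes (O : point) (r : R) (A : list point) : Prop :=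
  forall P, In P A -> dist3 O P = r.

Definition power_sum (A : list point) (lam : R) (M : point) : R :=
  fold_right (fun P acc => Rpower (dist3 M P) lam + acc) 0 A.

Definition const_on_sphere_minus (A : list point) (O : point) (r lam : R) : Prop :=
  exists C : R, forall M, dist3 O M = r -> ~ In M A -> power_sum A lam M = C.

(* Main.v *)
Require Import Defs.
From Stdlib Require Import Reals List Lra Lia.
Import ListNotations.
Open Scope R_scope.
Definition ev (l : list (R*R)) (x : R) : R :=
  fold_right (fun p acc => snd p * exp (fst p * x) + acc) 0 l.

Fixpoint sc (l : list (R*R)) : nat :=
  match l with
  | p :: ((q :: _) as t) => ((if Rlt_dec (snd p * snd q) 0 then 1 else 0) + sc t)%nat
  | _ => 0%nat
  end.

Fixpoint incE (l : list (R*R)) : Prop :=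
  match l with
  | p :: ((q :: _) as t) => fst p < fst q /\ incE t
  | _ => True
  end.

Definition nz (l : list (R*R)) : Prop := Forall (fun p => snd p <> 0) l.

Definition Dsh (b : R) (l : list (R*R)) : list (R*R) :=
  map (fun p => (fst p - b, snd p * (fst p - b))) l.

Fixpoint incr (l : list R) : Prop :=
  match l with
  | [] => True
  | x :: t => Forall (fun y => x < y) t /\ incr t
  end.

Lemma ev_deriv : forall l x,
  derivable_pt_lim (ev l) x (ev (map (fun p => (fst p, snd p * fst p)) l) x).
Proof.
  induction l as [|p t IH]; intro x.
  - simpl. unfold ev; simpl. apply derivable_pt_lim_const.
  - simpl.
    assert (H1 : derivable_pt_lim (fun y => snd p * exp (fst p * y)) x
                   (snd p * fst p * exp (fst p * x))).
    { assert (Hl : derivable_pt_lim (fun y => fst p * y) x (fst p)).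
      { assert (H := derivable_pt_lim_scal id (fst p) x 1 (derivable_pt_lim_id x)).
        rewrite Rmult_1_r in H. exact H. }
      assert (He := derivable_pt_lim_comp (fun y => fst p * y) exp x _ _ Hl
                     (derivable_pt_lim_exp (fst p * x))).
      assert (Hs := derivable_pt_lim_scal _ (snd p) x _ He).
      replace (snd p * fst p * exp (fst p * x)) with (snd p * (exp (fst p * x) * fst p)) by ring.
      exact Hs. }
    assert (Hp := derivable_pt_lim_plus _ _ x _ _ H1 (IH x)).
    unfold ev in *. simpl. exact Hp.
Qed.

Lemma ev_shift : forall l b x,
  ev (map (fun p => (fst p - b, snd p)) l) x = exp (- b * x) * ev l x.
Proof.
  induction l as [|p t IH]; intros b x; unfold ev in *; simpl.
  - ring.
  - rewrite IH. replace ((fst p - b) * x) with (- b * x + fst p * x) by ring.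
    rewrite exp_plus. ring.
Qed.

Lemma Dsh_eq : forall b l,
  Dsh b l = map (fun p => (fst p, snd p * fst p)) (map (fun p => (fst p - b, snd p)) l).
Proof. intros; unfold Dsh; rewrite map_map; reflexivity. Qed.

Lemma rolle_step : forall l b zs z0,
  incr (z0 :: zs) -> Forall (fun z => ev l z = 0) (z0 :: zs) ->
  exists zs', length zs' = length zs /\ incr zs' /\
     Forall (fun z => ev (Dsh b l) z = 0) zs' /\ Forall (fun y => z0 < y) zs'.
Proof.
  intros l b zs. induction zs as [|z1 zs IH]; intros z0 Hi Hz.
  - exists []. simpl. repeat split; constructor.
  - destruct Hi as [Hf Hi]. inversion Hz; subst. inversion Hf; subst.
    destruct (IH z1 Hi H2) as [zs' [Hl [Hi' [Hz' Hb]]]].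
    set (g := ev (map (fun p => (fst p - b, snd p)) l)).
    assert (Hd : forall c, z0 <= c <= z1 -> derivable_pt_lim g c (ev (Dsh b l) c)).
    { intros c _. rewrite Dsh_eq. apply ev_deriv. }
    destruct (MVT_cor2 g (ev (Dsh b l)) z0 z1 H3 Hd) as [c [Hc1 Hc2]].
    assert (Hg0 : g z0 = 0). { unfold g; rewrite ev_shift, H1; ring. }
    inversion H2; subst.
    assert (Hg1 : g z1 = 0). { unfold g; rewrite ev_shift, H5; ring. }
    rewrite Hg0, Hg1 in Hc1.
    assert (Hc : ev (Dsh b l) c = 0).
    { assert (z1 - z0 <> 0) by lra.
      apply (Rmult_eq_reg_r (z1 - z0)); [lra|auto]. }
    exists (c :: zs'). simpl. repeat split.
    + now rewrite Hl.
    + eapply Forall_impl; [|exact Hb]. intros y Hy; simpl in Hy; lra.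
    + exact Hi'.
    + constructor; auto.
    + constructor; [lra|]. eapply Forall_impl; [|exact Hb]. intros y Hy; simpl in Hy; lra.
Qed.

Lemma sc0_sign : forall l, sc l = 0%nat -> nz l ->
  Forall (fun p => 0 < snd p) l \/ Forall (fun p => snd p < 0) l.
Proof.
  induction l as [|p t IH]; intros H Hn.
  - left; constructor.
  - inversion Hn; subst. destruct t as [|q t'].
    + destruct (Rlt_dec 0 (snd p)); [left|right]; constructor; auto; try constructor; lra.
    + change (((if Rlt_dec (snd p * snd q) 0 then 1 else 0) + sc (q :: t'))%nat = 0%nat) in H.
      destruct (Rlt_dec (snd p * snd q) 0); [discriminate|].
      simpl plus in H. rename H2 into Hp0, H3 into Ht.
      destruct (IH H Ht) as [Hp|Hp]; inversion Hp; subst.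
      * left. constructor; auto.
        destruct (Rlt_dec 0 (snd p)); auto. exfalso. apply n.
        assert (snd p < 0) by lra. nra.
      * right. constructor; auto.
        destruct (Rlt_dec (snd p) 0); auto. exfalso. apply n.
        assert (0 < snd p) by lra. nra.
Qed.

Lemma ev_pos : forall l x, Forall (fun p => 0 < snd p) l -> l <> [] -> 0 < ev l x.
Proof.
  induction l as [|p t IH]; intros x H Hne; [congruence|].
  inversion H; subst. unfold ev; simpl. fold (ev t x).
  destruct t. unfold ev; simpl. assert (0 < exp (fst p * x)) by apply exp_pos. nra.
  assert (0 < ev (p0 :: t) x) by (apply IH; auto; congruence).
  assert (0 < exp (fst p * x)) by apply exp_pos. nra.
Qed.

Lemma ev_neg : forall l x, Forall (fun p => snd p < 0) l -> l <> [] -> ev l x < 0.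
Proof.
  induction l as [|p t IH]; intros x H Hne; [congruence|].
  inversion H; subst. unfold ev; simpl. fold (ev t x).
  destruct t. unfold ev; simpl. assert (0 < exp (fst p * x)) by apply exp_pos. nra.
  assert (ev (p0 :: t) x < 0) by (apply IH; auto; congruence).
  assert (0 < exp (fst p * x)) by apply exp_pos. nra.
Qed.

Lemma sc_Dsh_gt : forall l b, Forall (fun p => b < fst p) l -> sc (Dsh b l) = sc l.
Proof.
  induction l as [|p t IH]; intros b H; [reflexivity|].
  inversion H; subst. destruct t as [|q t']; [reflexivity|].
  change (sc (Dsh b (p :: q :: t'))) with
    ((if Rlt_dec (snd p * (fst p - b) * (snd q * (fst q - b))) 0 then 1 else 0) + sc (Dsh b (q :: t')))%nat.
  simpl sc at 2. rewrite IH by auto. inversion H3; subst.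
  f_equal.
  destruct (Rlt_dec (snd p * (fst p - b) * (snd q * (fst q - b))) 0) as [h|h];
  destruct (Rlt_dec (snd p * snd q) 0) as [h'|h']; auto; exfalso.
  - apply h'. assert (0 < (fst p - b) * (fst q - b)) by nra.
    replace (snd p * (fst p - b) * (snd q * (fst q - b))) with
      (snd p * snd q * ((fst p - b) * (fst q - b))) in h by ring. nra.
  - apply h. assert (0 < (fst p - b) * (fst q - b)) by nra.
    replace (snd p * (fst p - b) * (snd q * (fst q - b))) with
      (snd p * snd q * ((fst p - b) * (fst q - b))) by ring. nra.
Qed.

Lemma incE_gt : forall l p, incE (p :: l) -> Forall (fun q => fst p < fst q) l.
Proof.
  induction l as [|q t IH]; intros p H; constructor.
  - destruct H; auto.
  - destruct H as [H1 H2]. specialize (IH q H2).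
    eapply Forall_impl; [|exact IH]. intros a Ha; lra.
Qed.

Lemma step : forall l, incE l -> nz l -> (0 < sc l)%nat ->
  exists b, Forall (fun p => fst p <> b) l /\
    (forall p t, l = p :: t -> fst p < b) /\ S (sc (Dsh b l)) = sc l.
Proof.
  induction l as [|p t IH]; intros Hi Hn Hs; [simpl in Hs; lia|].
  destruct t as [|q t']; [simpl in Hs; lia|].
  destruct Hi as [Hpq Hi]. inversion Hn; subst.
  change (sc (p :: q :: t')) with
    ((if Rlt_dec (snd p * snd q) 0 then 1 else 0) + sc (q :: t'))%nat in *.
  destruct (Rlt_dec (snd p * snd q) 0) as [h|h].
  - exists ((fst p + fst q)/2).
    assert (Hg := incE_gt t' q Hi).
    split; [|split].
    + constructor; [lra|]. constructor; [lra|].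
      eapply Forall_impl; [|exact Hg]. intros a Ha; lra.
    + intros p0 t0 E; inversion E; subst; lra.
    + change (sc (Dsh ((fst p + fst q) / 2) (p :: q :: t'))) with
       ((if Rlt_dec (snd p * (fst p - (fst p + fst q) / 2) * (snd q * (fst q - (fst p + fst q) / 2))) 0 then 1 else 0)
         + sc (Dsh ((fst p + fst q) / 2) (q :: t')))%nat.
      rewrite sc_Dsh_gt.
      * destruct (Rlt_dec _ 0) as [h2|h2]; [|reflexivity]. exfalso.
        replace (snd p * (fst p - (fst p + fst q) / 2) * (snd q * (fst q - (fst p + fst q) / 2)))
          with (snd p * snd q * ((fst p - (fst p + fst q) / 2) * (fst q - (fst p + fst q) / 2))) in h2 by ring.
        assert ((fst p - (fst p + fst q) / 2) * (fst q - (fst p + fst q) / 2) < 0) by nra.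
        nra.
      * constructor; [lra|]. eapply Forall_impl; [|exact Hg]. intros a Ha; lra.
  - simpl in Hs. destruct (IH Hi H2 Hs) as [b [Hb1 [Hb2 Hb3]]].
    assert (Hqb := Hb2 q t' eq_refl).
    exists b. split; [|split].
    + constructor; auto. lra.
    + intros p0 t0 E; inversion E; subst; lra.
    + change (sc (Dsh b (p :: q :: t'))) with
       ((if Rlt_dec (snd p * (fst p - b) * (snd q * (fst q - b))) 0 then 1 else 0)
         + sc (Dsh b (q :: t')))%nat.
      rewrite <- Hb3. simpl.
      destruct (Rlt_dec _ 0) as [h2|h2]; [|reflexivity]. exfalso.
      replace (snd p * (fst p - b) * (snd q * (fst q - b)))
          with (snd p * snd q * ((fst p - b) * (fst q - b))) in h2 by ring.
      assert (0 < (fst p - b) * (fst q - b)) by nra. nra.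
Qed.

Lemma incE_Dsh : forall l b, incE l -> incE (Dsh b l).
Proof.
  induction l as [|p t IH]; intros b H; [exact I|].
  destruct t as [|q t']; [exact I|].
  destruct H as [H1 H2]. split; [simpl; lra|]. apply (IH b H2).
Qed.

Lemma nz_Dsh : forall l b, nz l -> Forall (fun p => fst p <> b) l -> nz (Dsh b l).
Proof.
  induction l as [|p t IH]; intros b H H'; [constructor|].
  inversion H; inversion H'; subst. constructor.
  - simpl. intro E. apply Rmult_integral in E. destruct E; [auto|]. apply H6; lra.
  - apply IH; auto.
Qed.

Theorem descartes : forall m l zs, length zs = m -> incE l -> nz l -> l <> [] ->
  incr zs -> Forall (fun z => ev l z = 0) zs -> (m <= sc l)%nat.
Proof.
  induction m as [|m IH]; intros l zs Hl Hi Hn Hne Hzi Hz; [lia|].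
  destruct zs as [|z0 zs]; [discriminate|].
  destruct (sc l) eqn:E.
  - exfalso. inversion Hz; subst.
    destruct (sc0_sign l E Hn) as [H|H].
    + assert (0 < ev l z0) by (apply ev_pos; auto). lra.
    + assert (ev l z0 < 0) by (apply ev_neg; auto). lra.
  - destruct (step l Hi Hn) as [b [Hb1 [_ Hb3]]]; [lia|].
    destruct (rolle_step l b zs z0 Hzi Hz) as [zs' [Hl' [Hi' [Hz' _]]]].
    assert (m <= sc (Dsh b l))%nat.
    { apply (IH _ zs'); auto.
      - simpl in Hl; lia.
      - apply incE_Dsh; auto.
      - apply nz_Dsh; auto.
      - destruct l; [congruence|discriminate]. }
    lia.
Qed.

Fixpoint ins (x : R) (l : list R) : list R :=
  match l with
  | [] => [x]
  | y :: t => if Rlt_dec x y then x :: y :: t else y :: ins x t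
  end.

Lemma ins_in : forall x l y, In y (ins x l) -> y = x \/ In y l.
Proof.
  intros x l. induction l as [|a t IH]; intros y H; simpl in *.
  - destruct H as [H|H]; [left; auto|contradiction].
  - destruct (Rlt_dec x a); simpl in H.
    + destruct H as [H|[H|H]]; auto.
    + destruct H as [H|H]; auto. destruct (IH y H); auto.
Qed.

Lemma ins_len : forall x l, length (ins x l) = S (length l).
Proof. induction l; simpl; auto. destruct (Rlt_dec x a); simpl; auto. Qed.

Lemma ins_incr : forall x l, incr l -> ~ In x l -> incr (ins x l).
Proof.
  induction l as [|a t IH]; intros H Hn; simpl.
  - split; constructor.
  - destruct (Rlt_dec x a).
    + simpl. split; [|exact H]. constructor; auto.
      destruct H as [H _]. eapply Forall_impl; [|exact H]. intros; lra.
    + simpl. destruct H as [H1 H2]. split.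
      * apply Forall_forall. intros y Hy. destruct (ins_in x t y Hy).
        -- assert (a <> x) by (intro; apply Hn; left; auto). subst; lra.
        -- rewrite Forall_forall in H1; auto.
      * apply IH; auto. intro; apply Hn; right; auto.
Qed.

Lemma sort_exists : forall l : list R, NoDup l ->
  exists s, length s = length l /\ incr s /\ (forall x, In x s -> In x l).
Proof.
  induction l as [|x t IH]; intros H.
  - exists []; simpl; auto.
  - inversion H; subst. destruct (IH H3) as [s [Hl [Hi Hin]]].
    exists (ins x s). split; [rewrite ins_len; simpl; auto|]. split.
    + apply ins_incr; auto.
    + intros y Hy. destruct (ins_in x s y Hy); [left; auto|right; auto].
Qed.

Definition s3 := sqrt 3.
Definition kk := sqrt (3 / (phi + 2)).

Lemma phi_facts : phi * phi = phi + 1 /\ / phi = phi - 1 /\ 1.618 < phi < 1.6181.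
Proof.
  assert (h5 : sqrt 5 * sqrt 5 = 5) by (apply sqrt_sqrt; lra).
  assert (h0 : 0 <= sqrt 5) by apply sqrt_pos.
  assert (hb : 2.236 < sqrt 5 < 2.2361) by (split; nra).
  unfold phi. split; [nra|]. split; [|lra].
  field_simplify_eq; [nra|lra].
Qed.

Lemma s3_facts : s3 * s3 = 3 /\ 1.732 < s3 < 1.7321.
Proof.
  assert (h : s3 * s3 = 3) by (apply sqrt_sqrt; lra).
  assert (h0 : 0 <= s3) by apply sqrt_pos.
  split; [auto|split; nra].
Qed.

Lemma kk_facts : kk * kk * (phi + 2) = 3 /\ 0.9105 < kk < 0.9107.
Proof.
  destruct phi_facts as [hp [hi hb]].
  assert (h : kk * kk = 3 / (phi + 2)) by (apply sqrt_sqrt; apply Rlt_le; apply Rdiv_lt_0_compat; lra).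
  assert (h0 : 0 <= kk) by apply sqrt_pos.
  assert (h' : kk * kk * (phi + 2) = 3) by (rewrite h; field; lra).
  split; [auto|split; nra].
Qed.

Definition sq3 (P Q : point) : R :=
  let '(x1, y1, z1) := P in
  let '(x2, y2, z2) := Q in
  (x1 - x2)^2 + (y1 - y2)^2 + (z1 - z2)^2.

Definition W1 : point := (s3, 0, 0).
Definition W2 : point := (0, kk * phi, kk).

Definition A1 := 6 - 2*(s3*phi).
Definition A2 := 6 - 2*s3.
Definition A3 := 6 - 2*(s3*(phi-1)).
Definition A4 : R := 6.
Definition A5 := 6 + 2*(s3*(phi-1)).
Definition A6 := 6 + 2*s3.
Definition A7 := 6 + 2*(s3*phi).
Definition B1 := 6 - 2*(kk*(phi+1)).
Definition B2 := 6 - 2*(kk*(phi-1)).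
Definition B3 := 6 + 2*(kk*(phi-1)).
Definition B4 := 6 + 2*(kk*(phi+1)).

Ltac vt1 :=
  destruct phi_facts as [hp [hi hb]]; destruct s3_facts as [hs hsb];
  unfold sq3, W1, A1, A2, A3, A4, A5, A6, A7; cbv beta iota; rewrite ?hi; nra.
Ltac vt2 :=
  destruct phi_facts as [hp [hi hb]]; destruct kk_facts as [hk hkb];
  assert (hk2 : kk * kk * (phi * phi) = kk * kk * (phi + 1)) by (rewrite hp; ring);
  assert (hk1 : kk * (phi * phi) = kk * (phi + 1)) by (rewrite hp; ring);
  unfold sq3, W2, B1, B2, B3, B4; cbv beta iota; rewrite ?hi; nra.

Lemma e1_0 : sq3 W1 (1,1,1) = A2. Proof. vt1. Qed.
Lemma e1_1 : sq3 W1 (1,1,-1) = A2. Proof. vt1. Qed.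
Lemma e1_2 : sq3 W1 (1,-1,1) = A2. Proof. vt1. Qed.
Lemma e1_3 : sq3 W1 (1,-1,-1) = A2. Proof. vt1. Qed.
Lemma e1_4 : sq3 W1 (-1,1,1) = A6. Proof. vt1. Qed.
Lemma e1_5 : sq3 W1 (-1,1,-1) = A6. Proof. vt1. Qed.
Lemma e1_6 : sq3 W1 (-1,-1,1) = A6. Proof. vt1. Qed.
Lemma e1_7 : sq3 W1 (-1,-1,-1) = A6. Proof. vt1. Qed.
Lemma e1_8 : sq3 W1 (0,/phi,phi) = A4. Proof. vt1. Qed.
Lemma e1_9 : sq3 W1 (0,/phi,-phi) = A4. Proof. vt1. Qed.
Lemma e1_10 : sq3 W1 (0,-/phi,phi) = A4. Proof. vt1. Qed.
Lemma e1_11 : sq3 W1 (0,-/phi,-phi) = A4. Proof. vt1. Qed.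
Lemma e1_12 : sq3 W1 (/phi,phi,0) = A3. Proof. vt1. Qed.
Lemma e1_13 : sq3 W1 (/phi,-phi,0) = A3. Proof. vt1. Qed.
Lemma e1_14 : sq3 W1 (-/phi,phi,0) = A5. Proof. vt1. Qed.
Lemma e1_15 : sq3 W1 (-/phi,-phi,0) = A5. Proof. vt1. Qed.
Lemma e1_16 : sq3 W1 (phi,0,/phi) = A1. Proof. vt1. Qed.
Lemma e1_17 : sq3 W1 (phi,0,-/phi) = A1. Proof. vt1. Qed.
Lemma e1_18 : sq3 W1 (-phi,0,/phi) = A7. Proof. vt1. Qed.
Lemma e1_19 : sq3 W1 (-phi,0,-/phi) = A7. Proof. vt1. Qed.
Lemma e2_0 : sq3 W2 (1,1,1) = B1. Proof. vt2. Qed.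
Lemma e2_1 : sq3 W2 (1,1,-1) = B2. Proof. vt2. Qed.
Lemma e2_2 : sq3 W2 (1,-1,1) = B3. Proof. vt2. Qed.
Lemma e2_3 : sq3 W2 (1,-1,-1) = B4. Proof. vt2. Qed.
Lemma e2_4 : sq3 W2 (-1,1,1) = B1. Proof. vt2. Qed.
Lemma e2_5 : sq3 W2 (-1,1,-1) = B2. Proof. vt2. Qed.
Lemma e2_6 : sq3 W2 (-1,-1,1) = B3. Proof. vt2. Qed.
Lemma e2_7 : sq3 W2 (-1,-1,-1) = B4. Proof. vt2. Qed.
Lemma e2_8 : sq3 W2 (0,/phi,phi) = B1. Proof. vt2. Qed.
Lemma e2_9 : sq3 W2 (0,/phi,-phi) = B3. Proof. vt2. Qed.
Lemma e2_10 : sq3 W2 (0,-/phi,phi) = B2. Proof. vt2. Qed.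
Lemma e2_11 : sq3 W2 (0,-/phi,-phi) = B4. Proof. vt2. Qed.
Lemma e2_12 : sq3 W2 (/phi,phi,0) = B1. Proof. vt2. Qed.
Lemma e2_13 : sq3 W2 (/phi,-phi,0) = B4. Proof. vt2. Qed.
Lemma e2_14 : sq3 W2 (-/phi,phi,0) = B1. Proof. vt2. Qed.
Lemma e2_15 : sq3 W2 (-/phi,-phi,0) = B4. Proof. vt2. Qed.
Lemma e2_16 : sq3 W2 (phi,0,/phi) = B2. Proof. vt2. Qed.
Lemma e2_17 : sq3 W2 (phi,0,-/phi) = B3. Proof. vt2. Qed.
Lemma e2_18 : sq3 W2 (-phi,0,/phi) = B2. Proof. vt2. Qed.
Lemma e2_19 : sq3 W2 (-phi,0,-/phi) = B3. Proof. vt2. Qed.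

Lemma sum1 : forall lam, fold_right (fun V acc => Rpower (sqrt (sq3 W1 V)) lam + acc) 0 std_dodeca_vertices =
  2 * Rpower (sqrt A1) lam + 4 * Rpower (sqrt A2) lam + 2 * Rpower (sqrt A3) lam + 4 * Rpower (sqrt A4) lam
  + 2 * Rpower (sqrt A5) lam + 4 * Rpower (sqrt A6) lam + 2 * Rpower (sqrt A7) lam.
Proof.
  intro lam. unfold std_dodeca_vertices. cbn [fold_right].
  rewrite e1_0, e1_1, e1_2, e1_3, e1_4, e1_5, e1_6, e1_7, e1_8, e1_9, e1_10, e1_11, e1_12, e1_13, e1_14, e1_15, e1_16, e1_17, e1_18, e1_19. ring.
Qed.

Lemma sum2 : forall lam, fold_right (fun V acc => Rpower (sqrt (sq3 W2 V)) lam + acc) 0 std_dodeca_vertices =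
  5 * Rpower (sqrt B1) lam + 5 * Rpower (sqrt B2) lam + 5 * Rpower (sqrt B3) lam + 5 * Rpower (sqrt B4) lam.
Proof.
  intro lam. unfold std_dodeca_vertices. cbn [fold_right].
  rewrite e2_0, e2_1, e2_2, e2_3, e2_4, e2_5, e2_6, e2_7, e2_8, e2_9, e2_10, e2_11, e2_12, e2_13, e2_14, e2_15, e2_16, e2_17, e2_18, e2_19. ring.
Qed.

Lemma order_facts : 0 < A1 /\ A1 < B1 /\ B1 < A2 /\ A2 < A3 /\ A3 < B2 /\ B2 < A4 /\ A4 < B3 /\
  B3 < A5 /\ A5 < A6 /\ A6 < B4 /\ B4 < A7.
Proof.
  destruct phi_facts as [hp [hi hb]]; destruct kk_facts as [hk hkb]; destruct s3_facts as [hs hsb].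
  assert (h1 : 2.8 < s3 * phi < 2.803) by (split; nra).
  assert (h2 : 1.473 < kk * phi < 1.474) by (split; nra).
  unfold A1, A2, A3, A4, A5, A6, A7, B1, B2, B3, B4.
  refine (conj _ (conj _ (conj _ (conj _ (conj _ (conj _ (conj _ (conj _ (conj _ (conj _ _)))))))))).
  all: lra.
Qed.

Lemma dist3_sq : forall P Q, dist3 P Q = sqrt (sq3 P Q).
Proof. intros [[x1 y1] z1] [[x2 y2] z2]; reflexivity. Qed.

Lemma sq3_sym : forall P Q, sq3 P Q = sq3 Q P.
Proof. intros [[x1 y1] z1] [[x2 y2] z2]; unfold sq3; cbv beta iota; ring. Qed.

Lemma sq3_refl : forall P, sq3 P P = 0.
Proof. intros [[x1 y1] z1]; unfold sq3; cbv beta iota; ring. Qed.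

Lemma sq3_nonneg : forall P Q, 0 <= sq3 P Q.
Proof. intros [[x1 y1] z1] [[x2 y2] z2]; unfold sq3; cbv beta iota; pose proof (pow2_ge_0 (x1-x2)); pose proof (pow2_ge_0 (y1-y2)); pose proof (pow2_ge_0 (z1-z2)); lra. Qed.

Definition comb (w1 w2 w3 w4 : R) (P1 P2 P3 P4 : point) : point :=
  let '(x1, y1, z1) := P1 in let '(x2, y2, z2) := P2 in
  let '(x3, y3, z3) := P3 in let '(x4, y4, z4) := P4 in
  (w1*x1 + w2*x2 + w3*x3 + w4*x4, w1*y1 + w2*y2 + w3*y3 + w4*y4, w1*z1 + w2*z2 + w3*z3 + w4*z4).

Lemma comb_id : forall w1 w2 w3 w4 P1 P2 P3 P4 Q, w1 + w2 + w3 + w4 = 1 ->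
  sq3 (comb w1 w2 w3 w4 P1 P2 P3 P4) Q =
  w1 * sq3 P1 Q + w2 * sq3 P2 Q + w3 * sq3 P3 Q + w4 * sq3 P4 Q
  - (w1*w2*sq3 P1 P2 + w1*w3*sq3 P1 P3 + w1*w4*sq3 P1 P4
     + w2*w3*sq3 P2 P3 + w2*w4*sq3 P2 P4 + w3*w4*sq3 P3 P4).
Proof.
  intros w1 w2 w3 w4 [[x1 y1] z1] [[x2 y2] z2] [[x3 y3] z3] [[x4 y4] z4] [[x y] z] H.
  unfold comb, sq3; cbv beta iota.
  replace w4 with (1 - w1 - w2 - w3) by lra. ring.
Qed.

Definition B1p : point := (1,1,1).
Definition B2p : point := (1,1,-1).
Definition B3p : point := (1,-1,1).
Definition B4p : point := (-1,1,1).

Definition wt1 (W : point) : R := let '(x, y, z) := W in (x + y + z - 1) / 2.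
Definition wt2 (W : point) : R := let '(x, y, z) := W in (1 - z) / 2.
Definition wt3 (W : point) : R := let '(x, y, z) := W in (1 - y) / 2.
Definition wt4 (W : point) : R := let '(x, y, z) := W in (1 - x) / 2.

Lemma wsum : forall W, wt1 W + wt2 W + wt3 W + wt4 W = 1.
Proof. intros [[x y] z]; unfold wt1, wt2, wt3, wt4; cbv beta iota; field. Qed.

Lemma W_comb : forall W, W = comb (wt1 W) (wt2 W) (wt3 W) (wt4 W) B1p B2p B3p B4p.
Proof.
  intros [[x y] z]; unfold comb, wt1, wt2, wt3, wt4, B1p, B2p, B3p, B4p; cbv beta iota.
  f_equal; [f_equal|]; field.
Qed.

Definition Mof (f : point -> point) (W : point) : point :=
  comb (wt1 W) (wt2 W) (wt3 W) (wt4 W) (f B1p) (f B2p) (f B3p) (f B4p).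

Section Transfer.
Variable f : point -> point.
Variable s : R.
Hypothesis hs : 0 < s.
Hypothesis hf2 : forall P Q, sq3 (f P) (f Q) = s^2 * sq3 P Q.

Lemma Mof_dist : forall W Q, sq3 (Mof f W) (f Q) = s^2 * sq3 W Q.
Proof.
  intros W Q. unfold Mof. rewrite comb_id by apply wsum. rewrite !hf2.
  assert (E : sq3 W Q = sq3 (comb (wt1 W) (wt2 W) (wt3 W) (wt4 W) B1p B2p B3p B4p) Q)
    by (rewrite <- W_comb; reflexivity).
  rewrite E, comb_id by apply wsum. ring.
Qed.

Lemma Mof_O : forall O r W, sq3 W (0,0,0) = 3 ->
  sq3 O (f B1p) = r^2 -> sq3 O (f B2p) = r^2 -> sq3 O (f B3p) = r^2 -> sq3 O (f B4p) = r^2 ->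
  sq3 O (Mof f W) = r^2.
Proof.
  intros O r W H0 h1 h2 h3 h4. rewrite sq3_sym. unfold Mof. rewrite comb_id by apply wsum.
  rewrite !hf2, !(sq3_sym _ O), h1, h2, h3, h4.
  assert (E : sq3 W (0,0,0) = sq3 (comb (wt1 W) (wt2 W) (wt3 W) (wt4 W) B1p B2p B3p B4p) (0,0,0))
    by (rewrite <- W_comb; reflexivity).
  rewrite E, comb_id in H0 by apply wsum.
  assert (e1 : sq3 B1p (0,0,0) = 3) by (unfold sq3, B1p; cbv beta iota; ring).
  assert (e2 : sq3 B2p (0,0,0) = 3) by (unfold sq3, B2p; cbv beta iota; ring).
  assert (e3 : sq3 B3p (0,0,0) = 3) by (unfold sq3, B3p; cbv beta iota; ring).
  assert (e4 : sq3 B4p (0,0,0) = 3) by (unfold sq3, B4p; cbv beta iota; ring).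
  rewrite e1, e2, e3, e4 in H0. pose proof (wsum W).
  transitivity (r^2 * (wt1 W + wt2 W + wt3 W + wt4 W) - s^2 *
    (wt1 W * wt2 W * sq3 B1p B2p + wt1 W * wt3 W * sq3 B1p B3p + wt1 W * wt4 W * sq3 B1p B4p +
     wt2 W * wt3 W * sq3 B2p B3p + wt2 W * wt4 W * sq3 B2p B4p + wt3 W * wt4 W * sq3 B3p B4p)); [ring|].
  rewrite H. nra.
Qed.

Lemma psum_transfer : forall W lam L, (forall V, In V L -> 0 < sq3 W V) ->
  power_sum (map f L) lam (Mof f W) =
  Rpower s lam * fold_right (fun V acc => Rpower (sqrt (sq3 W V)) lam + acc) 0 L.
Proof.
  intros W lam L. induction L as [|V L IH]; intro H.
  - unfold power_sum; simpl. ring.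
  - unfold power_sum in *. cbn [map fold_right]. rewrite IH by (intros; apply H; right; auto).
    rewrite dist3_sq, Mof_dist.
    assert (hv : 0 < sq3 W V) by (apply H; left; auto).
    rewrite sqrt_mult_alt by (apply pow2_ge_0).
    rewrite sqrt_pow2 by lra.
    rewrite <- Rpower_mult_distr; [ring | lra | apply sqrt_lt_R0; auto].
Qed.
End Transfer.

Definition LL : list (R*R) :=
  [(ln (sqrt A1), 2); (ln (sqrt B1), -5); (ln (sqrt A2), 4); (ln (sqrt A3), 2);
   (ln (sqrt B2), -5); (ln (sqrt A4), 4); (ln (sqrt B3), -5); (ln (sqrt A5), 2);
   (ln (sqrt A6), 4); (ln (sqrt B4), -5); (ln (sqrt A7), 2)].

Lemma ev_LL : forall lam, ev LL lam =
  fold_right (fun V acc => Rpower (sqrt (sq3 W1 V)) lam + acc) 0 std_dodeca_vertices -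
  fold_right (fun V acc => Rpower (sqrt (sq3 W2 V)) lam + acc) 0 std_dodeca_vertices.
Proof.
  intro lam. rewrite sum1, sum2. unfold ev, LL. cbn [fold_right fst snd].
  unfold Rpower. repeat rewrite (Rmult_comm lam (ln _)). ring.
Qed.

Lemma lnsq : forall a b, 0 < a -> a < b -> ln (sqrt a) < ln (sqrt b).
Proof.
  intros a b ha hab. apply ln_increasing. apply sqrt_lt_R0; auto.
  apply sqrt_lt_1_alt; lra.
Qed.

Lemma incE_LL : incE LL.
Proof.
  destruct order_facts as [h0 [h1 [h2 [h3 [h4 [h5 [h6 [h7 [h8 [h9 h10]]]]]]]]]].
  unfold LL; cbn [incE fst].
  repeat split; apply lnsq; lra.
Qed.

Lemma nz_LL : nz LL.
Proof. unfold nz, LL. repeat constructor; simpl; lra. Qed.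

Lemma sc_LL : sc LL = 8%nat.
Proof.
  unfold LL. cbn [sc snd].
  repeat (destruct (Rlt_dec _ _); [|exfalso; lra]) || idtac.
  repeat match goal with |- context [Rlt_dec ?a ?b] => destruct (Rlt_dec a b); try lra end.
  all: reflexivity.
Qed.

Lemma inB : In B1p std_dodeca_vertices /\ In B2p std_dodeca_vertices /\
            In B3p std_dodeca_vertices /\ In B4p std_dodeca_vertices.
Proof. unfold B1p, B2p, B3p, B4p, std_dodeca_vertices. simpl; tauto. Qed.

Lemma pos1 : forall V, In V std_dodeca_vertices -> 0 < sq3 W1 V.
Proof.
  destruct order_facts as [h0 [h1 [h2 [h3 [h4 [h5 [h6 [h7 [h8 [h9 h10]]]]]]]]]].
  intros V HV. unfold std_dodeca_vertices in HV.
  repeat (destruct HV as [<-|HV]; [first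
    [rewrite e1_0 | rewrite e1_1 | rewrite e1_2 | rewrite e1_3 | rewrite e1_4 | rewrite e1_5 | rewrite e1_6 |
     rewrite e1_7 | rewrite e1_8 | rewrite e1_9 | rewrite e1_10 | rewrite e1_11 | rewrite e1_12 | rewrite e1_13 |
     rewrite e1_14 | rewrite e1_15 | rewrite e1_16 | rewrite e1_17 | rewrite e1_18 | rewrite e1_19]; lra|]).
  destruct HV.
Qed.

Lemma pos2 : forall V, In V std_dodeca_vertices -> 0 < sq3 W2 V.
Proof.
  destruct order_facts as [h0 [h1 [h2 [h3 [h4 [h5 [h6 [h7 [h8 [h9 h10]]]]]]]]]].
  intros V HV. unfold std_dodeca_vertices in HV.
  repeat (destruct HV as [<-|HV]; [first
    [rewrite e2_0 | rewrite e2_1 | rewrite e2_2 | rewrite e2_3 | rewrite e2_4 | rewrite e2_5 | rewrite e2_6 |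
     rewrite e2_7 | rewrite e2_8 | rewrite e2_9 | rewrite e2_10 | rewrite e2_11 | rewrite e2_12 | rewrite e2_13 |
     rewrite e2_14 | rewrite e2_15 | rewrite e2_16 | rewrite e2_17 | rewrite e2_18 | rewrite e2_19]; lra|]).
  destruct HV.
Qed.

Lemma W1_0 : sq3 W1 (0,0,0) = 3.
Proof. destruct s3_facts as [hs _]. unfold sq3, W1; cbv beta iota. nra. Qed.

Lemma W2_0 : sq3 W2 (0,0,0) = 3.
Proof.
  destruct phi_facts as [hp _]. destruct kk_facts as [hk _].
  unfold sq3, W2; cbv beta iota.
  assert (kk * kk * (phi * phi) = kk * kk * (phi + 1)) by (rewrite hp; ring). nra.
Qed.

Lemma use_point : forall f s O r W lam C,
  0 < s -> (forall P Q, sq3 (f P) (f Q) = s^2 * sq3 P Q) ->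
  circumscribes O r (map f std_dodeca_vertices) ->
  sq3 W (0,0,0) = 3 -> (forall V, In V std_dodeca_vertices -> 0 < sq3 W V) ->
  (forall M, dist3 O M = r -> ~ In M (map f std_dodeca_vertices) ->
     power_sum (map f std_dodeca_vertices) lam M = C) ->
  Rpower s lam * fold_right (fun V acc => Rpower (sqrt (sq3 W V)) lam + acc) 0 std_dodeca_vertices = C.
Proof.
  intros f s O r W lam C hs hf2 hc hW0 hpos hC.
  rewrite <- (psum_transfer f s hs hf2 W lam _ hpos).
  apply hC.
  - destruct inB as [i1 [i2 [i3 i4]]].
    assert (hr : forall V, In V std_dodeca_vertices -> sq3 O (f V) = r^2).
    { intros V HV. assert (Hd := hc (f V) (in_map f _ _ HV)).
      rewrite dist3_sq in Hd. rewrite <- Hd. simpl. rewrite Rmult_1_r.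
      rewrite sqrt_sqrt; auto. apply sq3_nonneg. }
    assert (r0 : 0 <= r).
    { assert (Hd := hc (f B1p) (in_map f _ _ i1)). rewrite <- Hd, dist3_sq. apply sqrt_pos. }
    rewrite dist3_sq, (Mof_O f s hf2 O r W hW0); auto.
    apply sqrt_pow2; auto.
  - intro HM. apply in_map_iff in HM. destruct HM as [V [HV1 HV2]].
    assert (E := Mof_dist f s hf2 W V). rewrite <- HV1, sq3_refl in E.
    assert (0 < sq3 W V) by (apply hpos; auto).
    assert (0 < s^2) by (apply pow_lt; auto). nra.
Qed.

Theorem proposition4p1 :
  forall (A : list point) (O : point) (r : R),
    is_regular_dodecahedron_vertices A ->
    circumscribes O r A ->
    forall lams : list R,
      NoDup lams ->
      (forall lam, In lam lams -> const_on_sphere_minus A O r lam) ->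
      (length lams <= 8)%nat.
Proof.
  intros A O r [f [[s [hs hf]] ->]] hc lams hnd hall.
  assert (hf2 : forall P Q, sq3 (f P) (f Q) = s^2 * sq3 P Q).
  { intros P Q. specialize (hf P Q). rewrite !dist3_sq in hf.
    rewrite <- (sqrt_sqrt (sq3 (f P) (f Q))) by apply sq3_nonneg.
    rewrite hf. rewrite <- Rmult_assoc.
    replace (s * sqrt (sq3 P Q) * s * sqrt (sq3 P Q)) with (s*s * (sqrt (sq3 P Q) * sqrt (sq3 P Q))) by ring.
    rewrite sqrt_sqrt by apply sq3_nonneg. ring. }
  assert (Hz : forall lam, In lam lams -> ev LL lam = 0).
  { intros lam Hl. destruct (hall lam Hl) as [C HC].
    assert (E1 := use_point f s O r W1 lam C hs hf2 hc W1_0 pos1 HC).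
    assert (E2 := use_point f s O r W2 lam C hs hf2 hc W2_0 pos2 HC).
    rewrite ev_LL. assert (hp : 0 < Rpower s lam) by (unfold Rpower; apply exp_pos).
    apply (Rmult_eq_reg_l (Rpower s lam)); [|lra].
    rewrite Rmult_0_r, Rmult_minus_distr_l, E1, E2. ring. }
  destruct (sort_exists lams hnd) as [zs [Hlen [Hinc Hin]]].
  rewrite <- Hlen, <- sc_LL.
  apply (descartes (length zs) LL zs); auto.
  - exact incE_LL.
  - exact nz_LL.
  - unfold LL; discriminate.
  - apply Forall_forall. intros z Hz'. apply Hz, Hin, Hz'.
Qed.
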